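(* Let $n_x,n_y,n_z$ be pairwise relatively prime positive integers and let $K$ and $K'$ be Lissajous knots with frequencies $(n_x,n_y,n_z)$, $\phi_x=0$, whose phase shift pairs $(\phi_y,\phi_z)$ and $(\phi_y',\phi_z')$ belong to regions of the phase torus separated by $2n_y$ singular lines of the form $\phi_z=\frac{n_z}{n_y}\phi_y+l\frac{\pi}{n_y}$ ($l\in\mathbb{Z}$) (i.e., one region is reached from the other by successively crossing $2n_y$ consecutive such lines). Then all Type I crossings are the same (have the same over/under information) for both knots.
   Context: A Lissajous knot with frequencies $(n_x,n_y,n_z)$ (pairwise relatively prime integers) and phase shifts $(\phi_x,\phi_y,\phi_z)$ is the curve $K(t)=(\cos(n_xt+\phi_x),\cos(n_yt+\phi_y),\cos(n_zt+\phi_z))$, $0\le t\le2\pi$, when it is embedded. Take $\phi_x=0$. The phase torus is the torus of pairs $(\phi_y,\phi_z)\in[0,2\pi]\times[0,2\pi]$; the curve fails to be embedded exactly on the singular lines $\phi_z=\frac{n_z}{n_y}\phi_y+l\frac{\pi}{n_y}$, $\phi_z=l\frac{\pi}{n_x}$, $\phi_y=l\frac{\pi}{n_x}$ ($l\in\mathbb{Z}$), and the regions are the connected components of the complement of these lines. The Type I crossings of the projection of $K$ to the $xy$-plane are the double points given by parameter pairs $(t_1,t_2)=\big((-\frac{k}{n_x}+\frac{j}{n_y})\pi-\frac{\phi_y}{n_y},(\frac{k}{n_x}+\frac{j}{n_y})\pi-\frac{\phi_y}{n_y}\big)$ with $1\le k\le n_x-1$ and integers $j$ with $1+\lfloor \frac{n_y}{n_x}k+\frac{\phi_y}{\pi}\rfloor\le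 j\le \lfloor 2n_y-\frac{n_y}{n_x}k+\frac{\phi_y}{\pi}\rfloor$; $(k,j)$ are the parameters of the crossing. *)

(* Defs.v *)
From Stdlib Require Import Reals ZArith Arith ROrderedType.
Open Scope R_scope.

(* floor of a real number: up x is the integer with x < up x <= x + 1 *)
Definition floorR (x : R) : Z := (up x - 1)%Z.

Definition lissajous (nx ny nz : nat) (phy phz : R) (t : R) : R * R * R :=
  (cos (INR nx * t), cos (INR ny * t + phy), cos (INR nz * t + phz)).

Definition embedded (nx ny nz : nat) (phy phz : R) : Prop :=
  forall t1 t2, 0 <= t1 < 2 * PI -> 0 <= t2 < 2 * PI ->
    lissajous nx ny nz phy phz t1 = lissajous nx ny nz phy phz t2 -> t1 = t2.

Definition pairwise_coprime_pos (nx ny nz : nat) : Prop :=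
  (0 < nx)%nat /\ (0 < ny)%nat /\ (0 < nz)%nat /\
  Nat.gcd nx ny = 1%nat /\ Nat.gcd nx nz = 1%nat /\ Nat.gcd ny nz = 1%nat.

Definition on_singular_line (nx ny nz : nat) (phy phz : R) : Prop :=
  exists l : Z,
    phz = INR nz / INR ny * phy + IZR l * PI / INR ny \/
    phz = IZR l * PI / INR nx \/
    phy = IZR l * PI / INR nx.

(* Index of the band between consecutive lines
   phi_z = (nz/ny) phi_y + l pi/ny  (the point lies strictly between the
   lines with l = family_index and l = family_index + 1). *)
Definition family_index (ny nz : nat) (phy phz : R) : Z :=
  floorR ((INR ny * phz - INR nz * phy) / PI).

Definition phy_strip_index (nx : nat) (phy : R) : Z :=
  floorR (INR nx * phy / PI).

Definition typeI_param (nx ny : nat) (phy : R) (k j : Z) : Prop :=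
  (1 <= k <= Z.of_nat nx - 1)%Z /\
  (1 + floorR (INR ny / INR nx * IZR k + phy / PI) <= j)%Z /\
  (j <= floorR (2 * INR ny - INR ny / INR nx * IZR k + phy / PI))%Z.

Definition typeI_times (nx ny : nat) (phy : R) (k j : Z) : R * R :=
  ((- IZR k / INR nx + IZR j / INR ny) * PI - phy / INR ny,
   (IZR k / INR nx + IZR j / INR ny) * PI - phy / INR ny).

(* Over/under information of the crossing: comparison of the heights
   z(t1) and z(t2) of the two strands. *)
Definition typeI_overunder (nx ny nz : nat) (phy phz : R) (k j : Z)
  : comparison :=
  let tt := typeI_times nx ny phy k j in
  Rcompare (cos (INR nz * fst tt + phz)) (cos (INR nz * snd tt + phz)).

(* Main.v *)
Require Import Defs.
From Stdlib Require Import Reals ZArith Arith.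
From Stdlib Require Import Lra Lia Psatz ROrderedType.
Open Scope R_scope.

Lemma floorR_spec x : IZR (floorR x) <= x < IZR (floorR x) + 1.
Proof.
  unfold floorR. destruct (archimed x) as [H1 H2].
  rewrite minus_IZR. lra.
Qed.

Lemma floorR_unique m x : IZR m <= x < IZR m + 1 -> floorR x = m.
Proof.
  intros [H1 H2]. unfold floorR.
  assert (E : (m + 1)%Z = up x).
  { apply tech_up; rewrite plus_IZR; lra. }
  lia.
Qed.

Lemma floor_div (c n : Z) u : (0 < n)%Z ->
  floorR ((IZR c + u) / IZR n) = ((c + floorR u) / n)%Z.
Proof.
  intros Hn. set (s := floorR u). set (q := ((c + s) / n)%Z).
  pose proof (floorR_spec u) as Hs. fold s in Hs.
  pose proof (Z.div_mod (c + s) n ltac:(lia)) as Hd.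
  pose proof (Z.mod_pos_bound (c + s) n Hn) as Hb.
  fold q in Hd.
  assert (Z1 : (n * q <= c + s)%Z) by lia.
  assert (Z2 : (c + s + 1 <= n * q + n)%Z) by lia.
  apply IZR_le in Z1. apply IZR_le in Z2.
  rewrite !plus_IZR, mult_IZR in Z1. rewrite !plus_IZR, mult_IZR in Z2.
  assert (Hn' : 0 < IZR n) by (apply IZR_lt; lia).
  apply floorR_unique.
  set (y := (IZR c + u) / IZR n).
  assert (Ey : y * IZR n = IZR c + u) by (unfold y; field; lra).
  split; nra.
Qed.

Lemma sin_period_Z x q : sin (x + 2 * IZR q * PI) = sin x.
Proof.
  destruct q as [|p|p].
  - simpl. f_equal. ring.
  - replace (IZR (Z.pos p)) with (INR (Pos.to_nat p)).
    + apply sin_period.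
    + rewrite INR_IZR_INZ, positive_nat_Z. reflexivity.
  - replace (IZR (Z.neg p)) with (- INR (Pos.to_nat p)).
    2:{ rewrite INR_IZR_INZ, positive_nat_Z. rewrite <- Pos2Z.opp_pos, opp_IZR. reflexivity. }
    rewrite <- (sin_period (x + 2 * - INR (Pos.to_nat p) * PI) (Pos.to_nat p)).
    f_equal. ring.
Qed.

Lemma sin_sign (m : Z) x : IZR m * PI < x < (IZR m + 1) * PI ->
  if Z.even m then 0 < sin x else sin x < 0.
Proof.
  intros [H1 H2].
  destruct (Z.Even_or_Odd m) as [[q Hq]|[q Hq]]; subst m.
  - rewrite Z.even_mul. simpl.
    rewrite <- (sin_period_Z x (- q)). rewrite opp_IZR.
    rewrite mult_IZR in H1, H2. apply sin_gt_0; lra.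
  - rewrite Z.even_add, Z.even_mul. simpl.
    rewrite <- (sin_period_Z x (- q)). rewrite opp_IZR.
    rewrite plus_IZR, mult_IZR in H1, H2. apply sin_lt_0; lra.
Qed.

Lemma sin_same_sign (m m' : Z) x y :
  IZR m * PI < x < (IZR m + 1) * PI ->
  IZR m' * PI < y < (IZR m' + 1) * PI ->
  Z.even m = Z.even m' -> 0 < sin x * sin y.
Proof.
  intros Hx Hy He. apply sin_sign in Hx. apply sin_sign in Hy.
  rewrite He in Hx. destruct (Z.even m'); nra.
Qed.

Lemma rcompare_same a b a' b' c s s' :
  a - b = c * s -> a' - b' = c * s' -> 0 < s * s' ->
  Rcompare a b = Rcompare a' b'.
Proof.
  intros E1 E2 Hs.
  destruct (Rcompare_spec a b), (Rcompare_spec a' b'); try reflexivity; exfalso.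
  - assert (c * s = 0) by lra. assert (c * s' <> 0) by lra. nra.
  - assert (c * s = 0) by lra. assert (c * s' <> 0) by lra. nra.
  - assert (c * s' = 0) by lra. assert (c * s <> 0) by lra. nra.
  - nra.
  - assert (c * s' = 0) by lra. assert (c * s <> 0) by lra. nra.
  - nra.
Qed.

Lemma not_on_line_strict nx ny nz phy phz :
  (0 < ny)%nat -> ~ on_singular_line nx ny nz phy phz ->
  let w := (INR ny * phz - INR nz * phy) / PI in
  IZR (family_index ny nz phy phz) < w < IZR (family_index ny nz phy phz) + 1.
Proof.
  intros Hny Hns w. unfold family_index. fold w.
  pose proof (floorR_spec w) as [H1 H2]. split; [|lra].
  destruct H1 as [H1|H1]; [exact H1|exfalso].
  apply Hns. exists (floorR w). left.
  assert (0 < INR ny) by (apply lt_0_INR; lia).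
  pose proof PI_RGT_0.
  rewrite H1. unfold w. field. lra.
Qed.

Lemma P_interval (ny nz : nat) (F j : Z) (w P : R) :
  (0 < ny)%nat -> IZR F < w < IZR F + 1 ->
  P = PI * (IZR (Z.of_nat nz * j) + w) / INR ny ->
  let m := ((Z.of_nat nz * j + F) / Z.of_nat ny)%Z in
  IZR m * PI < P < (IZR m + 1) * PI.
Proof.
  intros Hny Hw HP m.
  assert (Fw : floorR w = F) by (apply floorR_unique; lra).
  pose proof (floor_div (Z.of_nat nz * j) (Z.of_nat ny) w ltac:(lia)) as Hf.
  rewrite Fw in Hf. fold m in Hf.
  set (y := (IZR (Z.of_nat nz * j) + w) / IZR (Z.of_nat ny)) in Hf.
  pose proof (floorR_spec y) as [Y1 Y2]. rewrite Hf in Y1, Y2.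
  assert (Hny' : 0 < INR ny) by (apply lt_0_INR; lia).
  pose proof PI_RGT_0.
  assert (EP : P = PI * y) by (rewrite HP; unfold y; rewrite <- INR_IZR_INZ; field; lra).
  assert (Ys : IZR m < y).
  { destruct Y1 as [Y1|Y1]; [exact Y1|exfalso].
    assert (Ew : w = IZR (m * Z.of_nat ny - Z.of_nat nz * j)).
    { rewrite minus_IZR, mult_IZR, <- INR_IZR_INZ, Y1. unfold y.
      rewrite <- INR_IZR_INZ. field. lra. }
    rewrite Ew in Hw. destruct Hw as [A B].
    apply lt_IZR in A. rewrite <- plus_IZR in B. apply lt_IZR in B. lia. }
  rewrite EP. split; nra.
Qed.

Theorem corollary1 (nx ny nz : nat) (phy phz phy' phz' : R) :
  pairwise_coprime_pos nx ny nz ->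
  embedded nx ny nz phy phz ->
  embedded nx ny nz phy' phz' ->
  ~ on_singular_line nx ny nz phy phz ->
  ~ on_singular_line nx ny nz phy' phz' ->
  phy_strip_index nx phy = phy_strip_index nx phy' ->
  (family_index ny nz phy' phz' = family_index ny nz phy phz + 2 * Z.of_nat ny)%Z \/
  (family_index ny nz phy' phz' = family_index ny nz phy phz - 2 * Z.of_nat ny)%Z ->
  forall k j : Z,
    (typeI_param nx ny phy k j <-> typeI_param nx ny phy' k j) /\
    (typeI_param nx ny phy k j ->
       typeI_overunder nx ny nz phy phz k j = typeI_overunder nx ny nz phy' phz' k j).
Proof.
  intros [Hx [Hy [Hz _]]] _ _ Hns Hns' Hstrip Hfam k j.
  assert (Hx' : 0 < INR nx) by (apply lt_0_INR; lia).
  assert (Hy' : 0 < INR ny) by (apply lt_0_INR; lia).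
  pose proof PI_RGT_0 as Hpi.
  split.
  - assert (L : forall p, INR ny / INR nx * IZR k + p / PI =
        (IZR (Z.of_nat ny * k) + INR nx * p / PI) / IZR (Z.of_nat nx)).
    { intros p. rewrite mult_IZR, <- !INR_IZR_INZ. field. lra. }
    assert (U : forall p, 2 * INR ny - INR ny / INR nx * IZR k + p / PI =
        (IZR (2 * Z.of_nat ny * Z.of_nat nx - Z.of_nat ny * k) + INR nx * p / PI)
          / IZR (Z.of_nat nx)).
    { intros p. rewrite minus_IZR, !mult_IZR, <- !INR_IZR_INZ. field. lra. }
    unfold typeI_param. rewrite !L, !U, !floor_div by lia.
    unfold phy_strip_index in Hstrip. rewrite Hstrip. tauto.
  - intros _. unfold typeI_overunder, typeI_times. simpl fst. simpl snd.
    set (F := family_index ny nz phy phz).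
    set (F' := family_index ny nz phy' phz').
    pose proof (not_on_line_strict nx ny nz phy phz Hy Hns) as Hw. simpl in Hw. fold F in Hw.
    pose proof (not_on_line_strict nx ny nz phy' phz' Hy Hns') as Hw'. simpl in Hw'. fold F' in Hw'.
    set (w := (INR ny * phz - INR nz * phy) / PI) in Hw.
    set (w' := (INR ny * phz' - INR nz * phy') / PI) in Hw'.
    set (P := INR nz * (IZR j / INR ny * PI - phy / INR ny) + phz).
    set (P' := INR nz * (IZR j / INR ny * PI - phy' / INR ny) + phz').
    assert (EP : P = PI * (IZR (Z.of_nat nz * j) + w) / INR ny).
    { unfold P, w. rewrite mult_IZR, <- INR_IZR_INZ. field. lra. }
    assert (EP' : P' = PI * (IZR (Z.of_nat nz * j) + w') / INR ny).
    { unfold P', w'. rewrite mult_IZR, <- INR_IZR_INZ. field. lra. }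
    pose proof (P_interval ny nz F j w P Hy Hw EP) as I1.
    pose proof (P_interval ny nz F' j w' P' Hy Hw' EP') as I2.
    simpl in I1, I2.
    assert (Hpos : 0 < sin P * sin P').
    { eapply sin_same_sign; [exact I1 | exact I2 |].
      assert (Hm : ((Z.of_nat nz * j + F') / Z.of_nat ny =
                    (Z.of_nat nz * j + F) / Z.of_nat ny + 2)%Z \/
                   ((Z.of_nat nz * j + F') / Z.of_nat ny =
                    (Z.of_nat nz * j + F) / Z.of_nat ny + (-2))%Z).
      { destruct Hfam as [E|E]; fold F F' in E; rewrite E; [left|right].
        - replace (Z.of_nat nz * j + (F + 2 * Z.of_nat ny))%Z
            with (Z.of_nat nz * j + F + 2 * Z.of_nat ny)%Z by ring.
          apply Z.div_add. lia.
        - replace (Z.of_nat nz * j + (F - 2 * Z.of_nat ny))%Z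
            with (Z.of_nat nz * j + F + (-2) * Z.of_nat ny)%Z by ring.
          apply Z.div_add. lia. }
      destruct Hm as [Hm|Hm]; rewrite Hm, Z.even_add; simpl;
        destruct (Z.even _); reflexivity. }
    eapply rcompare_same with (c := -2 * sin (- (INR nz * IZR k) * PI / INR nx))
      (s := sin P) (s' := sin P'); [ | | exact Hpos].
    + rewrite form2. f_equal; [f_equal; f_equal; field; lra | f_equal; unfold P; field; lra].
    + rewrite form2. f_equal; [f_equal; f_equal; field; lra | f_equal; unfold P'; field; lra].
Qed.
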